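(* Let $G_f$ and $G_g$ be ROBDDs over the same variable ordering, representing boolean functions $f$ and $g$, whose node identifiers are compact and whose nodes respect the extended ordering described in the context. Then $f\equiv g$ if and only if for every level $i$ and every $j$, the $j$-th node on level $i$ of $G_f$ and the $j$-th node on level $i$ of $G_g$ are numerically identical (i.e. equal as triples $(\mathit{uid},\mathit{low},\mathit{high})$).
   Context: An OBDD over variables $x_0,x_1,\dots$ is a rooted DAG with leaves $\bot,\top$ and internal nodes labelled by a variable index $i$ with low child (for $x_i=\bot$) and high child (for $x_i=\top$), labels strictly increasing along every path; the internal nodes with label $i$ form level $i$. Each internal node $v$ has a unique identifier $x_{i,\mathit{id}}=(i,\mathit{id})$ with $\mathit{id}\in\mathbb N$ unique within level $i$, and is represented as the triple $(x_{i,\mathit{id}},\mathit{low},\mathit{high})$ where $\mathit{low},\mathit{high}$ are identifiers of internal nodes or leaf values. An ROBDD is an OBDD with no node having two identical children and no two distinct nodes with the same label and the same children. Extended ordering: on identifiers and leaves, $(i_1,\mathit{id}_1)<(i_2,\mathit{id}_2)$ iff $i_1<i_2$ or ($i_1=i_2$ and $\mathit{id}_1<\mathit{id}_2$), and every internal identifier is smaller than $\bot$, with $\bot<\top$; moreover, for any two internal nodes $(x_{i,\mathit{id}_1},\mathit{low}_1,\mathit{high}_1)$ and $(x_{i,\mathit{id}_2},\mathit{low}_2,\mathit{high}_2)$ on the same level $i$, $\mathit{id}_1<\mathit{id}_2$ iff $\mathit{low}_1<\mathit{low}_2$ or ($\mathit{low}_1=\mathit{low}_2$ and $\mathit{high}_1<\mathit{high}_2$),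 children compared by this same ordering. Identifiers are compact if, for every level $i$ with $N_i$ nodes, the identifiers on level $i$ are exactly $0,1,\dots,N_i-1$ (so the $j$-th node on level $i$ in this order has identifier $j-1$). *)

(* Defs.v *)
From mathcomp Require Import all_boot.
Set Implicit Arguments. Unset Strict Implicit. Unset Printing Implicit Defensive.

(* Identifier x_{i,id} = (i, id). *)
Definition uid := (nat * nat)%type.
(* A pointer is either an internal node identifier (inl) or a leaf value (inr):
   inr false = bot, inr true = top. *)
Definition ptr := (uid + bool)%type.
Definition node := (uid * ptr * ptr)%type.

Definition nuid (n : node) : uid := n.1.1.
Definition nlabel (n : node) : nat := (nuid n).1.
Definition nid (n : node) : nat := (nuid n).2.
Definition nlow (n : node) : ptr := n.1.2.
Definition nhigh (n : node) : ptr := n.2.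

Record bdd := BDD { bnodes : seq node; broot : ptr }.

Definition has_node (G : bdd) (u : uid) : bool := u \in map nuid (bnodes G).

Inductive evals (G : bdd) (x : nat -> bool) : ptr -> bool -> Prop :=
| evals_leaf b : evals G x (inr b) b
| evals_node n b : n \in bnodes G ->
    evals G x (if x (nlabel n) then nhigh n else nlow n) b ->
    evals G x (inl (nuid n)) b.

Definition represents (G : bdd) (f : (nat -> bool) -> bool) : Prop :=
  forall x, evals G x (broot G) (f x).

Inductive reach (G : bdd) : ptr -> ptr -> Prop :=
| reach_refl p : reach G p p
| reach_step n q : n \in bnodes G ->
    (reach G (nlow n) q \/ reach G (nhigh n) q) ->
    reach G (inl (nuid n)) q.

Definition child_ok (n : node) (c : ptr) : bool :=
  match c with inl u => nlabel n < u.1 | inr _ => true end.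

Definition is_obdd (G : bdd) : Prop :=
  [/\ uniq (map nuid (bnodes G)),
      (forall n, n \in bnodes G ->
         forall u, (nlow n = inl u \/ nhigh n = inl u) -> has_node G u),
      (forall n, n \in bnodes G -> child_ok n (nlow n) && child_ok n (nhigh n)),
      (forall u, broot G = inl u -> has_node G u) &
      (forall n, n \in bnodes G -> reach G (broot G) (inl (nuid n)))].

Definition is_robdd (G : bdd) : Prop :=
  [/\ is_obdd G,
      (forall n, n \in bnodes G -> nlow n != nhigh n) &
      (forall n1 n2, n1 \in bnodes G -> n2 \in bnodes G ->
         nlabel n1 = nlabel n2 -> nlow n1 = nlow n2 -> nhigh n1 = nhigh n2 ->
         n1 = n2)].

Definition ptr_lt (p q : ptr) : bool :=
  match p, q with
  | inl (i1, d1), inl (i2, d2) => (i1 < i2) || ((i1 == i2) && (d1 < d2))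
  | inl _, inr _ => true
  | inr _, inl _ => false
  | inr b1, inr b2 => ~~ b1 && b2
  end.

Definition children_lt (n1 n2 : node) : bool :=
  ptr_lt (nlow n1) (nlow n2) ||
  ((nlow n1 == nlow n2) && ptr_lt (nhigh n1) (nhigh n2)).

Definition respects_order (G : bdd) : Prop :=
  forall n1 n2, n1 \in bnodes G -> n2 \in bnodes G ->
    nlabel n1 = nlabel n2 -> (nid n1 < nid n2) = children_lt n1 n2.

Definition level_nodes (G : bdd) (i : nat) : seq node :=
  sort (fun a b => nid a <= nid b) [seq n <- bnodes G | nlabel n == i].

Definition compact (G : bdd) : Prop :=
  forall i, perm_eq [seq nid n | n <- level_nodes G i]
                    (iota 0 (size (level_nodes G i))).

Definition jth_node (G : bdd) (i j : nat) : option node :=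
  nth None (map Some (level_nodes G i)) j.

(* Main.v *)
Require Import Defs.
From mathcomp Require Import all_boot.
From Stdlib Require Import Setoid Classical.
From mathcomp Require Import zify.
Set Implicit Arguments. Unset Strict Implicit. Unset Printing Implicit Defensive.

Definition sim (G1 G2 : bdd) (p q : ptr) : Prop :=
  forall x c, evals G1 x p c <-> evals G2 x q c.

Definition valid (G : bdd) (p : ptr) : bool :=
  match p with inl u => has_node G u | inr _ => true end.

Definition ptr_ge (k : nat) (p : ptr) : bool :=
  match p with inl u => k <= u.1 | inr _ => true end.

Definition upd (x : nat -> bool) (l : nat) (b : bool) : nat -> bool :=
  fun j => if j == l then b else x j.

Lemma uniq_map_eq (T : eqType) (U : eqType) (f : T -> U) (s : seq T) a b :
  uniq (map f s) -> a \in s -> b \in s -> f a = f b -> a = b.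
Proof.
move=> u ha hb e.
have := map_inj_in_uniq (f := f) (s := s).
move=> H.
elim: s u ha hb {H} => // y s IH /= /andP[ny u].
rewrite !inE => /orP[/eqP ea|ha] /orP[/eqP eb|hb]; subst => //.
- by case/negP: ny; rewrite e; apply/mapP; exists b.
- by case/negP: ny; rewrite -e; apply/mapP; exists a.
- exact: IH.
Qed.

Lemma evals_leafE G x b c : evals G x (inr b) c -> c = b.
Proof. by move=> H; inversion H. Qed.

Lemma evals_nodeE G x n c : uniq (map nuid (bnodes G)) -> n \in bnodes G ->
  evals G x (inl (nuid n)) c <->
  evals G x (if x (nlabel n) then nhigh n else nlow n) c.
Proof.
move=> U Hn; split; last by apply: evals_node.
move=> H; inversion H; subst.
have e : n0 = n by apply: (uniq_map_eq U) => //.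
by subst.
Qed.

Lemma evals_det G x p b1 b2 : uniq (map nuid (bnodes G)) ->
  evals G x p b1 -> evals G x p b2 -> b1 = b2.
Proof.
move=> U H; elim: H b2 => [b|n b Hn _ IH] b2 H2.
  by rewrite (evals_leafE H2).
by apply: IH; apply/(evals_nodeE _ _ U Hn).
Qed.

Lemma evals_indep G x y p c k :
  (forall n, n \in bnodes G -> child_ok n (nlow n) && child_ok n (nhigh n)) ->
  ptr_ge k p -> (forall j, k <= j -> x j = y j) ->
  evals G x p c -> evals G y p c.
Proof.
move=> CO hp hxy H; elim: H k hp hxy => [b|n b Hn _ IH] k hp hxy.
  by constructor.
apply: evals_node => //.
have hl : k <= nlabel n by [].
rewrite -(hxy _ hl).
have/andP[c1 c2] := CO n Hn.
apply: (IH (nlabel n).+1).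
  by case: (x (nlabel n)); [move: c2|move: c1]; rewrite /child_ok;
     case: (nhigh n) => //; case: (nlow n).
by move=> j hj; apply: hxy; apply: leq_trans hl (ltnW hj).
Qed.

Fixpoint reach_ind' (G : bdd) (P : ptr -> ptr -> Prop)
  (H0 : forall p, P p p)
  (H1 : forall n q, n \in bnodes G -> (reach G (nlow n) q /\ P (nlow n) q) \/
                      (reach G (nhigh n) q /\ P (nhigh n) q) -> P (inl (nuid n)) q)
  p q (r : reach G p q) {struct r} : P p q :=
  match r with
  | reach_refl p => H0 p
  | reach_step n q hn o =>
      H1 n q hn (match o with
                 | or_introl r1 => or_introl (conj r1 (reach_ind' H0 H1 r1))
                 | or_intror r2 => or_intror (conj r2 (reach_ind' H0 H1 r2))
                 end)
  end.
Lemma sim_sym G1 G2 p q : sim G1 G2 p q -> sim G2 G1 q p.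
Proof. by move=> H x c; split => /H. Qed.

Lemma sim_trans G1 G2 G3 p q r : sim G1 G2 p q -> sim G2 G3 q r -> sim G1 G3 p r.
Proof. by move=> H1 H2 x c; rewrite H1 H2. Qed.

Lemma child_ge n c : child_ok n c -> ptr_ge (nlabel n).+1 c.
Proof. by case: c. Qed.

Lemma obdd_co G n : is_obdd G -> n \in bnodes G ->
  ptr_ge (nlabel n).+1 (nlow n) && ptr_ge (nlabel n).+1 (nhigh n).
Proof. by case=> _ _ CO _ _ /CO /andP[/child_ge -> /child_ge ->]. Qed.

Lemma evals_indep_iff G x y p c k : is_obdd G ->
  ptr_ge k p -> (forall j, k <= j -> x j = y j) ->
  evals G x p c <-> evals G y p c.
Proof.
case=> _ _ CO _ _ hp hxy; split; apply: evals_indep CO hp _ => // j /hxy //.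
Qed.

Lemma node_at G x n b c : is_obdd G -> n \in bnodes G ->
  evals G x (if b then nhigh n else nlow n) c <->
  evals G (upd x (nlabel n) b) (inl (nuid n)) c.
Proof.
move=> O Hn; have U : uniq (map nuid (bnodes G)) by case: O.
rewrite evals_nodeE // /upd eqxx.
have /andP[h1 h2] := obdd_co O Hn.
apply: (@evals_indep_iff _ _ _ _ _ (nlabel n).+1) => //; first by case: b.
by move=> j hj; case: eqP => // e; move: hj; rewrite e ltnn.
Qed.

Lemma sim_node_indep G1 G2 n q : is_obdd G1 -> is_obdd G2 -> n \in bnodes G1 ->
  ptr_ge (nlabel n).+1 q -> sim G1 G2 (inl (nuid n)) q ->
  sim G1 G1 (nlow n) (nhigh n).
Proof.
move=> O1 O2 Hn hq S x c.
rewrite (node_at x false c O1 Hn) (node_at x true c O1 Hn) !S.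
apply: (@evals_indep_iff _ _ _ _ _ (nlabel n).+1) => // j hj.
by rewrite /upd; case: eqP => // e; move: hj; rewrite e ltnn.
Qed.

Lemma sim_children G1 G2 n m b : is_obdd G1 -> is_obdd G2 -> n \in bnodes G1 ->
  m \in bnodes G2 -> nlabel n = nlabel m ->
  sim G1 G2 (inl (nuid n)) (inl (nuid m)) ->
  sim G1 G2 (if b then nhigh n else nlow n) (if b then nhigh m else nlow m).
Proof.
move=> O1 O2 Hn Hm e S x c.
by rewrite (node_at x b c O1 Hn) (node_at x b c O2 Hm) e S.
Qed.

Lemma valid_node G u : valid G (inl u) -> exists2 n, n \in bnodes G & u = nuid n.
Proof. by move=> /mapP[n hn ->]; exists n. Qed.

Lemma structure G1 G2 k p q : is_obdd G1 -> is_obdd G2 ->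
  valid G1 p -> valid G2 q -> ptr_ge k p -> ptr_ge k q ->
  (forall n, n \in bnodes G1 -> k <= nlabel n -> ~ sim G1 G1 (nlow n) (nhigh n)) ->
  (forall n, n \in bnodes G2 -> k <= nlabel n -> ~ sim G2 G2 (nlow n) (nhigh n)) ->
  sim G1 G2 p q ->
  (exists b, p = inr b /\ q = inr b) \/
  exists n m, n \in bnodes G1 /\ m \in bnodes G2 /\ p = inl (nuid n) /\
     q = inl (nuid m) /\ nlabel n = nlabel m /\
     sim G1 G2 (nlow n) (nlow m) /\ sim G1 G2 (nhigh n) (nhigh m).
Proof.
move=> O1 O2 vp vq kp kq NC1 NC2 S.
case: p vp kp S => [u|b] vp kp S; case: q vq kq S => [v|b'] vq kq S.
- have [n Hn eu] := valid_node vp; have [m Hm ev] := valid_node vq; subst.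
  case: (ltngtP (nlabel n) (nlabel m)) => hl.
  + exfalso; apply: (NC1 n Hn kp); apply: sim_node_indep O1 O2 Hn _ S.
    exact: hl.
  + exfalso; apply: (NC2 m Hm kq); apply: sim_node_indep O2 O1 Hm _ (sim_sym S).
    exact: hl.
  + right; exists n, m; do 5 (split => //).
    split; [exact: (sim_children false O1 O2 Hn Hm hl S)|
            exact: (sim_children true O1 O2 Hn Hm hl S)].
- have [n Hn eu] := valid_node vp; subst.
  exfalso; apply: (NC1 n Hn kp); exact: sim_node_indep O1 O2 Hn _ S.
- have [m Hm ev] := valid_node vq; subst.
  exfalso; apply: (NC2 m Hm kq); exact: sim_node_indep O2 O1 Hm _ (sim_sym S).
- left; exists b; split => //.
  have := (S (fun _ => false) b).1 (evals_leaf _ _ _).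
  by move/evals_leafE ->.
Qed.
Lemma valid_child G n : is_obdd G -> n \in bnodes G ->
  valid G (nlow n) && valid G (nhigh n).
Proof.
case=> _ CH _ _ _ Hn; apply/andP; split.
- by case E: (nlow n) => [u|] //=; apply: (CH n Hn); left.
- by case E: (nhigh n) => [u|] //=; apply: (CH n Hn); right.
Qed.

Lemma ge_weaken N d n c : ptr_ge (nlabel n).+1 c -> N - d.+1 <= nlabel n ->
  ptr_ge (N - d) c.
Proof. case: c => //= u h1 h2; lia. Qed.

Lemma within G N : is_robdd G -> (forall n, n \in bnodes G -> nlabel n < N) ->
  forall d p q, valid G p -> valid G q -> ptr_ge (N - d) p -> ptr_ge (N - d) q ->
  sim G G p q -> p = q.
Proof.
case=> O R1 R2 HN; elim=> [|d IH] p q vp vq kp kq S.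
- have NC : forall n, n \in bnodes G -> N - 0 <= nlabel n ->
      ~ sim G G (nlow n) (nhigh n).
    by move=> n /HN h1 h2; move: h1 h2; rewrite subn0; lia.
  case: (structure O O vp vq kp kq NC NC S) => [[b [-> ->]] //|].
  move=> [n [m [Hn [_ [ep _]]]]]; subst.
  move: kp (HN n Hn) => /=; rewrite subn0 /nlabel /nuid => a b; exfalso; lia.
- have NC : forall n, n \in bnodes G -> N - d.+1 <= nlabel n ->
      ~ sim G G (nlow n) (nhigh n).
    move=> n Hn hk Sn; have /andP[v1 v2] := valid_child O Hn.
    have /andP[g1 g2] := obdd_co O Hn.
    have := IH _ _ v1 v2 (ge_weaken g1 hk) (ge_weaken g2 hk) Sn.
    by move/eqP; rewrite (negbTE (R1 n Hn)).
  case: (structure O O vp vq kp kq NC NC S) => [[b [-> ->]] //|].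
  move=> [n [m [Hn [Hm [ep [eq [el [Sl Sh]]]]]]]]; subst.
  have /andP[v1 v2] := valid_child O Hn; have /andP[w1 w2] := valid_child O Hm.
  have /andP[g1 g2] := obdd_co O Hn; have /andP[h1 h2] := obdd_co O Hm.
  have kn : N - d.+1 <= nlabel n by [].
  have km : N - d.+1 <= nlabel m by [].
  have el' := IH _ _ v1 w1 (ge_weaken g1 kn) (ge_weaken h1 km) Sl.
  have eh' := IH _ _ v2 w2 (ge_weaken g2 kn) (ge_weaken h2 km) Sh.
  by rewrite (R2 n m Hn Hm el el' eh').
Qed.
Lemma bound (s : seq node) : exists N, forall n, n \in s -> nlabel n < N.
Proof.
elim: s => [|a s [N HN]]; first by exists 0.
exists (maxn N (nlabel a).+1) => n; rewrite inE => /orP[/eqP->|/HN h].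
- by rewrite leq_max leqnn orbT.
- by rewrite leq_max h.
Qed.

Lemma nc_all G n : is_robdd G -> n \in bnodes G -> ~ sim G G (nlow n) (nhigh n).
Proof.
move=> R Hn S; have [N HN] := bound (bnodes G).
have [O R1 R2] := R.
have /andP[v1 v2] := valid_child O Hn.
have g0 : forall p, ptr_ge (N - N) p by rewrite subnn; case.
have := within R HN v1 v2 (g0 _) (g0 _) S.
by apply/eqP; exact: R1.
Qed.

Lemma ptr_ge0 p : ptr_ge 0 p. Proof. by case: p. Qed.

Lemma valid_uid G n : n \in bnodes G -> valid G (inl (nuid n)).
Proof. by move=> Hn; apply/mapP; exists n. Qed.

Lemma corr G1 G2 : is_robdd G1 -> is_robdd G2 ->
  sim G1 G2 (broot G1) (broot G2) ->
  forall n, n \in bnodes G1 -> exists m, m \in bnodes G2 /\ nlabel n = nlabel m /\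
     sim G1 G2 (nlow n) (nlow m) /\ sim G1 G2 (nhigh n) (nhigh m).
Proof.
move=> R1 R2 Sr n Hn.
have [O1 _ _] := R1; have [O2 _ _] := R2.
have NC1 : forall n, n \in bnodes G1 -> 0 <= nlabel n -> ~ sim G1 G1 (nlow n) (nhigh n).
  by move=> n' h _; apply: nc_all.
have NC2 : forall n, n \in bnodes G2 -> 0 <= nlabel n -> ~ sim G2 G2 (nlow n) (nhigh n).
  by move=> n' h _; apply: nc_all.
have U1 : uniq (map nuid (bnodes G1)) by case: O1.
have KEY : forall p q, valid G1 p -> valid G2 q -> sim G1 G2 p q ->
    forall n0, n0 \in bnodes G1 -> p = inl (nuid n0) ->
    exists m, m \in bnodes G2 /\ nlabel n0 = nlabel m /\
     sim G1 G2 (nlow n0) (nlow m) /\ sim G1 G2 (nhigh n0) (nhigh m).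
  move=> p q vp vq S n0 H0 ep.
  case: (structure (k := 0) O1 O2 vp vq (ptr_ge0 _) (ptr_ge0 _) NC1 NC2 S) => [[b [e _]]|].
    by rewrite ep in e.
  move=> [n1 [m [H1 [Hm [e1 [_ rest]]]]]].
  have e : n1 = n0 by apply: (uniq_map_eq U1) => //; rewrite ep in e1; case: e1.
  by subst; exists m.
have [_ _ _ vr reachall] := O1.
have vr1 : valid G1 (broot G1) by case E: (broot G1) => [u|] //=; apply: vr.
have vr2 : valid G2 (broot G2).
  by case: O2 => _ _ _ vr' _; case E: (broot G2) => [u|] //=; apply: vr'.
have P : forall p r, reach G1 p r -> forall q, valid G1 p -> valid G2 q ->
    sim G1 G2 p q -> exists q', valid G2 q' /\ sim G1 G2 r q'.
  apply: reach_ind'.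
    by move=> p q _ vq S; exists q.
  move=> n0 r H0 IHo q vp vq S.
  have [m [Hm [el [Sl Sh]]]] := KEY _ _ vp vq S n0 H0 erefl.
  have /andP[v1 v2] := valid_child O1 H0; have /andP[w1 w2] := valid_child O2 Hm.
  case: IHo => [[_ IH]|[_ IH]]; [exact: IH _ v1 w1 Sl | exact: IH _ v2 w2 Sh].
have [q [vq S]] := P _ _ (reachall n Hn) _ vr1 vr2 Sr.
exact: KEY _ _ (valid_uid Hn) vq S n Hn erefl.
Qed.
Lemma count_lt_iota a N : a <= N -> count (fun v => v < a) (iota 0 N) = a.
Proof.
move=> h; rewrite -(subnKC h) iotaD count_cat add0n.
rewrite (@eq_in_count _ _ predT) ?count_predT ?size_iota; last first.
  by move=> v; rewrite mem_iota add0n.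
rewrite (@eq_in_count _ _ pred0) ?count_pred0 ?addn0 //.
by move=> v; rewrite mem_iota /= => /andP[h1 _]; rewrite ltnNge h1.
Qed.

Definition lev (G : bdd) (l : nat) := [seq n' <- bnodes G | nlabel n' == l].

Lemma nid_count G n : is_robdd G -> compact G -> respects_order G -> n \in bnodes G ->
  nid n = count (fun n' => children_lt n' n) (lev G (nlabel n)).
Proof.
move=> R C RO Hn; set L := lev G (nlabel n).
have P : perm_eq (map nid L) (iota 0 (size L)).
  have := C (nlabel n); rewrite /level_nodes size_sort.
  apply: perm_trans; apply: perm_map; by rewrite perm_sym perm_sort.
have inL : n \in L by rewrite mem_filter eqxx.
have hlt : nid n < size L.
  have : nid n \in map nid L by apply/mapP; exists n.
  by rewrite (perm_mem P) mem_iota.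
rewrite -(@eq_in_count _ (fun n' => nid n' < nid n)); last first.
  move=> n'; rewrite mem_filter => /andP[/eqP e h]; exact: RO.
rewrite -(count_map nid (fun v => v < nid n)) (permP P) count_lt_iota //.
exact: ltnW.
Qed.

Definition key (n : node) : ptr * ptr := (nlow n, nhigh n).

Lemma count_transfer G1 G2 l (P : pred (ptr * ptr)) : is_robdd G1 -> is_robdd G2 ->
  (forall n', n' \in lev G1 l -> exists2 m', m' \in lev G2 l & key n' = key m') ->
  (forall m', m' \in lev G2 l -> exists2 n', n' \in lev G1 l & key m' = key n') ->
  count (fun n' => P (key n')) (lev G1 l) = count (fun m' => P (key m')) (lev G2 l).
Proof.
move=> R1 R2 H12 H21.
rewrite -(count_map key P) -(count_map key P); apply/permP.
have uq : forall G, is_robdd G -> uniq (map key (lev G l)).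
  move=> G [[U _ _ _ _] _ RU]; rewrite map_inj_in_uniq.
    by rewrite filter_uniq // (map_uniq U).
  move=> a b; rewrite !mem_filter => /andP[/eqP ea ha] /andP[/eqP eb hb] [e1 e2].
  by apply: RU => //; rewrite ea eb.
apply: uniq_perm; [exact: uq|exact: uq|] => k; apply/mapP/mapP.
- by case=> n' /H12 [m' hm' ->] ->; exists m'.
- by case=> m' /H21 [n' hn' ->] ->; exists n'.
Qed.
Definition klt (k1 k2 : ptr * ptr) : bool :=
  ptr_lt k1.1 k2.1 || ((k1.1 == k2.1) && ptr_lt k1.2 k2.2).

Lemma cross G1 G2 N : is_robdd G1 -> is_robdd G2 -> compact G1 -> compact G2 ->
  respects_order G1 -> respects_order G2 -> sim G1 G2 (broot G1) (broot G2) ->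
  (forall n, n \in bnodes G1 -> nlabel n < N) ->
  (forall n, n \in bnodes G2 -> nlabel n < N) ->
  forall d p q, valid G1 p -> valid G2 q -> ptr_ge (N - d) p -> ptr_ge (N - d) q ->
  sim G1 G2 p q -> p = q.
Proof.
move=> R1 R2 C1 C2 RO1 RO2 Sr HN1 HN2.
have [O1 _ _] := R1; have [O2 _ _] := R2.
have NC1 : forall k n, n \in bnodes G1 -> k <= nlabel n -> ~ sim G1 G1 (nlow n) (nhigh n).
  by move=> k n' h _; apply: nc_all.
have NC2 : forall k n, n \in bnodes G2 -> k <= nlabel n -> ~ sim G2 G2 (nlow n) (nhigh n).
  by move=> k n' h _; apply: nc_all.
elim=> [|d IH] p q vp vq kp kq S.
- case: (structure O1 O2 vp vq kp kq (NC1 _) (NC2 _) S) => [[b [-> ->]] //|].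
  move=> [n [m [Hn [_ [ep _]]]]]; subst.
  move: kp (HN1 n Hn) => /=; rewrite subn0 /nlabel /nuid => a b; exfalso; lia.
case: (structure O1 O2 vp vq kp kq (NC1 _) (NC2 _) S) => [[b [-> ->]] //|].
move=> [n [m [Hn [Hm [ep [eq [el [Sl Sh]]]]]]]]; subst.
have CH : forall n m, n \in bnodes G1 -> m \in bnodes G2 -> N - d.+1 <= nlabel n ->
    nlabel n = nlabel m -> sim G1 G2 (nlow n) (nlow m) -> sim G1 G2 (nhigh n) (nhigh m) ->
    key n = key m.
  move=> n' m' Hn' Hm' kn el' Sl' Sh'.
  have km : N - d.+1 <= nlabel m' by rewrite -el'.
  have /andP[v1 v2] := valid_child O1 Hn'; have /andP[w1 w2] := valid_child O2 Hm'.
  have /andP[g1 g2] := obdd_co O1 Hn'; have /andP[h1 h2] := obdd_co O2 Hm'.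
  rewrite /key (IH _ _ v1 w1 (ge_weaken g1 kn) (ge_weaken h1 km) Sl').
  by rewrite (IH _ _ v2 w2 (ge_weaken g2 kn) (ge_weaken h2 km) Sh').
have kn : N - d.+1 <= nlabel n by [].
have knm := CH n m Hn Hm kn el Sl Sh.
have eid : nid n = nid m.
  rewrite (nid_count R1 C1 RO1 Hn) (nid_count R2 C2 RO2 Hm) -el.
  transitivity (count (fun n' => klt (key n') (key n)) (lev G1 (nlabel n))) => //.
  rewrite (@count_transfer G1 G2 (nlabel n) (fun k => klt k (key n))) //.
  - by rewrite knm.
  - move=> n'; rewrite mem_filter => /andP[/eqP e Hn'].
    have [m' [Hm' [el' [Sl' Sh']]]] := corr R1 R2 Sr Hn'.
    exists m'; first by rewrite mem_filter -el' e eqxx.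
    by apply: CH => //; rewrite e.
  - move=> m'; rewrite mem_filter => /andP[/eqP e Hm'].
    have [n' [Hn' [el' [Sl' Sh']]]] := corr R2 R1 (sim_sym Sr) Hm'.
    exists n'; first by rewrite mem_filter -el' e eqxx.
    apply/esym/CH => //; last by apply: sim_sym.
    + by rewrite -el' e.
    + by apply: sim_sym.
move: el eid; rewrite /nlabel /nid => e1 e2.
by rewrite [nuid n]surjective_pairing [nuid m]surjective_pairing e1 e2.
Qed.
Lemma mem_transfer G1 G2 n : is_robdd G1 -> is_robdd G2 -> compact G1 -> compact G2 ->
  respects_order G1 -> respects_order G2 -> sim G1 G2 (broot G1) (broot G2) ->
  n \in bnodes G1 -> n \in bnodes G2.
Proof.
move=> R1 R2 C1 C2 RO1 RO2 Sr Hn.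
have [N HN] := bound (bnodes G1 ++ bnodes G2).
have HN1 : forall n, n \in bnodes G1 -> nlabel n < N.
  by move=> n' h; apply: HN; rewrite mem_cat h.
have HN2 : forall n, n \in bnodes G2 -> nlabel n < N.
  by move=> n' h; apply: HN; rewrite mem_cat h orbT.
have g0 : forall p, ptr_ge (N - N) p by rewrite subnn; case.
have X := cross R1 R2 C1 C2 RO1 RO2 Sr HN1 HN2 (d := N).
have [O1 _ _] := R1; have [O2 _ _] := R2.
have [m [Hm [el [Sl Sh]]]] := corr R1 R2 Sr Hn.
have /andP[v1 v2] := valid_child O1 Hn; have /andP[w1 w2] := valid_child O2 Hm.
have e1 := X _ _ v1 w1 (g0 _) (g0 _) Sl.
have e2 := X _ _ v2 w2 (g0 _) (g0 _) Sh.
have Su : sim G1 G2 (inl (nuid n)) (inl (nuid m)).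
  move=> x c; have [U1 _ _ _ _] := O1; have [U2 _ _ _ _] := O2.
  rewrite (evals_nodeE _ _ U1 Hn) (evals_nodeE _ _ U2 Hm) el.
  by case: (x (nlabel m)); [apply: Sh|apply: Sl].
have := X _ _ (valid_uid Hn) (valid_uid Hm) (g0 _) (g0 _) Su; case=> eu.
suff -> : n = m by [].
move: eu e1 e2; rewrite /nuid /nlow /nhigh.
by case: n {Hn Su el Sl Sh v1 v2} => [[a b] c]; case: m {Hm w1 w2} => [[a' b'] c'] /= -> -> ->.
Qed.

Lemma nth_Some_eq (s t : seq node) :
  (forall j, nth None (map Some s) j = nth None (map Some t) j) -> s = t.
Proof.
elim: s t => [|a s IH] [|b t] H //.
- by have := H 0.
- by have := H 0.
- have := H 0; case=> ->; congr cons; apply: IH => j; exact: (H j.+1).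
Qed.

Lemma evals_transfer G1 G2 x p c : (forall n, n \in bnodes G1 -> n \in bnodes G2) ->
  evals G1 x p c -> evals G2 x p c.
Proof.
move=> M H; elim: H => [b|n b Hn _ IH]; first by constructor.
by apply: evals_node => //; apply: M.
Qed.

Theorem proposition7 (Gf Gg : bdd) (f g : (nat -> bool) -> bool) :
  is_robdd Gf -> is_robdd Gg ->
  represents Gf f -> represents Gg g ->
  compact Gf -> compact Gg ->
  respects_order Gf -> respects_order Gg ->
  (forall x, f x = g x) <->
  (broot Gf = broot Gg /\ forall i j, jth_node Gf i j = jth_node Gg i j).
Proof.
move=> R1 R2 Rf Rg C1 C2 RO1 RO2.
have [[U1 _ _ vr1 _] _ _] := R1; have [[U2 _ _ vr2 _] _ _] := R2.
split.
- move=> efg.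
  have Sr : sim Gf Gg (broot Gf) (broot Gg).
    move=> x c; split => H.
    + by rewrite (evals_det U1 H (Rf x)) efg.
    + by rewrite (evals_det U2 H (Rg x)) -efg.
  have [N HN] := bound (bnodes Gf ++ bnodes Gg).
  have HN1 : forall n, n \in bnodes Gf -> nlabel n < N.
    by move=> n' h; apply: HN; rewrite mem_cat h.
  have HN2 : forall n, n \in bnodes Gg -> nlabel n < N.
    by move=> n' h; apply: HN; rewrite mem_cat h orbT.
  have g0 : forall p, ptr_ge (N - N) p by rewrite subnn; case.
  split.
    apply: (cross R1 R2 C1 C2 RO1 RO2 Sr HN1 HN2 (d := N)) (g0 _) (g0 _) Sr.
    + by case E: (broot Gf) => [u|] //=; apply: vr1.
    + by case E: (broot Gg) => [u|] //=; apply: vr2.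
  move=> i j; rewrite /jth_node /level_nodes.
  have M12 := fun n => mem_transfer (n := n) R1 R2 C1 C2 RO1 RO2 Sr.
  have M21 := fun n => mem_transfer (n := n) R2 R1 C2 C1 RO2 RO1 (sim_sym Sr).
  have Uf : uniq (bnodes Gf) by exact: map_uniq U1.
  have Ug : uniq (bnodes Gg) by exact: map_uniq U2.
  have P : perm_eq [seq n <- bnodes Gf | nlabel n == i] [seq n <- bnodes Gg | nlabel n == i].
    apply: uniq_perm; rewrite ?filter_uniq // => n; rewrite !mem_filter.
    by apply/andP/andP => -[a b]; split => //; [apply: M12|apply: M21].
  have -> // : sort (fun a b => nid a <= nid b) [seq n <- bnodes Gf | nlabel n == i] =
          sort (fun a b => nid a <= nid b) [seq n <- bnodes Gg | nlabel n == i].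
  apply/perm_sort_inP => //.
  + by move=> a b _ _; apply: leq_total.
  + by move=> a b c _ _ _; apply: leq_trans.
  + move=> a b; rewrite !mem_filter => /andP[/eqP ea ha] /andP[/eqP eb hb].
    rewrite -eqn_leq => /eqP e; apply: (uniq_map_eq U1) => //.
    move: ea eb e; rewrite /nlabel /nid => ea eb e.
    by rewrite [nuid a]surjective_pairing [nuid b]surjective_pairing ea eb e.
- case=> er ej x.
  have EL : forall i, level_nodes Gf i = level_nodes Gg i.
    by move=> i; apply: nth_Some_eq => j; apply: ej.
  have M : forall n, n \in bnodes Gf -> n \in bnodes Gg.
    move=> n h.
    have : n \in level_nodes Gf (nlabel n) by rewrite mem_sort mem_filter eqxx h.
    by rewrite EL mem_sort mem_filter => /andP[].
  have := evals_transfer M (Rf x); rewrite er => H.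
  exact: evals_det U2 H (Rg x).
Qed.
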